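(* Let $\mathcal L$ be a linearly ordered non-discrete MV-algebra and let $\mathcal F,\mathcal G$ be filters (in the sense below). Then $\mathcal F\sqsubseteq\!\!\to\mathcal G=\{1\}$ if and only if either $\mathcal G\subseteq\mathcal F$, or there is $g\in L$ with $\mathcal G=[g,1]$ and $\mathcal F=\,]g,1]$.
   Context: $\mathcal L=(L,\oplus,\lnot,0)$ is a linearly ordered MV-algebra. We write $1=\lnot0$ and $x\to y=\lnot x\oplus y$. Non-discrete means no element has an immediate successor or an immediate predecessor. A ''filter'' means a nonempty proper upward-closed subset $\mathcal F$ of $L$ with kernel $\mathcal K(\mathcal F)=\{z:\forall a\notin\mathcal F,\ z\to a\notin\mathcal F\}=\{1\}$. We write $[g,1]=\{x:x\ge g\}$ and $]g,1]=\{x:x>g\}$. For upward-closed $\mathcal F$ and $a\in L$, let $\mathcal F_a=\{z:z\to a\notin\mathcal F\}$. For $\mathcal F\subseteq\mathcal G$ we put $\mathcal F\sqsubseteq\!\!\to\mathcal G=\bigcap_{a\in L\setminus\mathcal G}\mathcal F_a$, and in general $\mathcal F\sqsubseteq\!\!\to\mathcal G:=(\mathcal F\cap\mathcal G)\sqsubseteq\!\!\to\mathcal G$. *)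

(* Defs.v *)
Set Implicit Arguments.

Record MVAlgebra := {
  mv_car :> Type;
  mv_oplus : mv_car -> mv_car -> mv_car;
  mv_neg : mv_car -> mv_car;
  mv_zero : mv_car;
  mv_assoc : forall x y z, mv_oplus x (mv_oplus y z) = mv_oplus (mv_oplus x y) z;
  mv_comm : forall x y, mv_oplus x y = mv_oplus y x;
  mv_zero_r : forall x, mv_oplus x mv_zero = x;
  mv_negneg : forall x, mv_neg (mv_neg x) = x;
  mv_one_abs : forall x, mv_oplus x (mv_neg mv_zero) = mv_neg mv_zero;
  mv_luk : forall x y,
    mv_oplus (mv_neg (mv_oplus (mv_neg x) y)) y
    = mv_oplus (mv_neg (mv_oplus (mv_neg y) x)) x
}.

Section MVDefs.
Variable L : MVAlgebra.

Definition mv_one : L := mv_neg L (mv_zero L).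
Definition mv_imp (x y : L) : L := mv_oplus L (mv_neg L x) y.
Definition mv_le (x y : L) : Prop := mv_imp x y = mv_one.
Definition mv_lt (x y : L) : Prop := mv_le x y /\ x <> y.

Definition linearly_ordered : Prop := forall x y : L, mv_le x y \/ mv_le y x.

Definition imm_succ (y x : L) : Prop :=
  mv_lt x y /\ ~ (exists z, mv_lt x z /\ mv_lt z y).
Definition imm_pred (y x : L) : Prop :=
  mv_lt y x /\ ~ (exists z, mv_lt y z /\ mv_lt z x).

Definition non_discrete : Prop :=
  forall x : L, ~ (exists y, imm_succ y x) /\ ~ (exists y, imm_pred y x).

Definition upward_closed (F : L -> Prop) : Prop :=
  forall x y, F x -> mv_le x y -> F y.

Definition kernel (F : L -> Prop) (z : L) : Prop :=
  forall a, ~ F a -> ~ F (mv_imp z a).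

Definition is_filter (F : L -> Prop) : Prop :=
  (exists x, F x) /\ (exists x, ~ F x) /\ upward_closed F /\
  (forall z, kernel F z <-> z = mv_one).

Definition F_sub (F : L -> Prop) (a : L) (z : L) : Prop := ~ F (mv_imp z a).

(* for F subset of G: intersection over a notin G of F_a *)
Definition sub_arrow_aux (F G : L -> Prop) (z : L) : Prop :=
  forall a, ~ G a -> F_sub F a z.

(* general case: F [=-> G := (F cap G) [=-> G *)
Definition sub_arrow (F G : L -> Prop) : L -> Prop :=
  sub_arrow_aux (fun x => F x /\ G x) G.

End MVDefs.

Arguments mv_one {L}.
Arguments mv_imp {L}.
Arguments mv_le {L}.
Arguments mv_lt {L}.
Arguments upward_closed {L}.
Arguments kernel {L}.
Arguments is_filter {L}.
Arguments F_sub {L}.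
Arguments sub_arrow_aux {L}.
Arguments sub_arrow {L}.

(* Main.v *)
Require Import Defs.
From Stdlib Require Import Classical.

Lemma neg_one (L : MVAlgebra) : mv_neg L mv_one = mv_zero L.
Proof. unfold mv_one; apply mv_negneg. Qed.
Lemma zero_l (L : MVAlgebra) (x : L) : mv_oplus L (mv_zero L) x = x.
Proof. rewrite mv_comm; apply mv_zero_r. Qed.
Lemma imp_one_l (L : MVAlgebra) (a : L) : mv_imp mv_one a = a.
Proof. unfold mv_imp; rewrite neg_one, zero_l; reflexivity. Qed.
Lemma one_r (L : MVAlgebra) (x : L) : mv_oplus L x mv_one = mv_one.
Proof. unfold mv_one; apply mv_one_abs. Qed.
Lemma one_l (L : MVAlgebra) (x : L) : mv_oplus L mv_one x = mv_one.
Proof. rewrite mv_comm; apply one_r. Qed.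
Lemma negx_x (L : MVAlgebra) (x : L) : mv_oplus L (mv_neg L x) x = mv_one.
Proof.
  pose proof (mv_luk L x mv_one) as H. fold (@mv_one L) in H.
  rewrite one_r, neg_one, zero_l in H.
  symmetry; exact H.
Qed.
Lemma le_refl (L : MVAlgebra) (x : L) : mv_le x x.
Proof. unfold mv_le, mv_imp; apply negx_x. Qed.
Lemma join_eq (L : MVAlgebra) (b c : L) :
  mv_le b c -> mv_oplus L (mv_neg L (mv_imp c b)) b = c.
Proof.
  intro H. unfold mv_le, mv_imp in *. rewrite mv_luk, H, neg_one, zero_l. reflexivity.
Qed.
Lemma mono (L : MVAlgebra) (x a b : L) :
  mv_le a b -> mv_le (mv_oplus L x a) (mv_oplus L x b).
Proof.
  intro H. rewrite <- (join_eq L a b H).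
  set (w := mv_neg L (mv_imp b a)). unfold mv_le, mv_imp.
  rewrite (mv_comm L w a), (mv_assoc L x a w), mv_assoc, negx_x, one_l. reflexivity.
Qed.
Lemma fact2 (L : MVAlgebra) (x y : L) :
  mv_le y x -> mv_neg L (mv_oplus L (mv_neg L x) (mv_neg L (mv_imp x y))) = y.
Proof.
  intro H. pose proof (mv_luk L (mv_neg L y) (mv_neg L x)) as E.
  rewrite !mv_negneg in E.
  unfold mv_le, mv_imp in *.
  rewrite (mv_comm L x (mv_neg L y)), H, neg_one, zero_l in E.
  rewrite (mv_comm L y (mv_neg L x)), (mv_comm L (mv_neg L _) (mv_neg L x)) in E. rewrite E, mv_negneg. reflexivity.
Qed.
Lemma antisym (L : MVAlgebra) (a b : L) : mv_le a b -> mv_le b a -> a = b.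
Proof.
  intros H1 H2. pose proof (fact2 L b a H1) as E. rewrite H2, neg_one, mv_zero_r, mv_negneg in E.
  symmetry; exact E.
Qed.

Theorem mainTheorem16 (L : MVAlgebra)
  (Hlin : linearly_ordered L) (Hnd : non_discrete L)
  (F G : L -> Prop) (HF : is_filter F) (HG : is_filter G) :
  (forall z, sub_arrow F G z <-> z = mv_one) <->
  ((forall x, G x -> F x) \/
   (exists g : L, (forall x, G x <-> mv_le g x) /\ (forall x, F x <-> mv_lt g x))).
Proof.
  destruct HF as [[f0 Hf0] [[nf Hnf] [UF KF]]].
  destruct HG as [[g0 Hg0] [[ng Hng] [UG KG]]].
  split.
  - intro H. destruct (classic (forall x, G x -> F x)) as [Hsub|Hns]; [left; exact Hsub|right].
    apply not_all_ex_not in Hns. destruct Hns as [g Hg].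
    apply imply_to_and in Hg. destruct Hg as [Gg nFg].
    assert (key : forall b c, G b -> ~ F b -> G c -> ~ F c -> mv_le b c -> b <> c -> False).
    { intros b c Gb nFb Gc nFc bc ne.
      assert (Hz : sub_arrow F G (mv_imp c b)).
      { unfold sub_arrow, sub_arrow_aux, F_sub. intros a nGa [Fa Ga].
        apply nFc. apply (UF _ c Fa).
        destruct (Hlin a b) as [ab|ba].
        - pose proof (mono L (mv_neg L (mv_imp c b)) a b ab) as M.
          rewrite (join_eq L b c bc) in M. exact M.
        - exfalso. apply nGa. exact (UG b a Gb ba). }
      apply H in Hz. apply ne. apply antisym; assumption. }
    assert (claim : forall c, G c -> ~ F c -> c = g).
    { intros c Gc nFc. apply NNPP; intro ne.
      destruct (Hlin c g) as [cg|gc].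
      - exact (key c g Gc nFc Gg nFg cg ne).
      - apply (key g c Gg nFg Gc nFc gc). intro e; apply ne; symmetry; exact e. }
    exists g; split.
    + intro x; split.
      * intro Gx. destruct (classic (F x)) as [Fx|nFx].
        -- destruct (Hlin g x) as [gx|xg]; [exact gx|].
           exfalso. exact (nFg (UF x g Fx xg)).
        -- rewrite (claim x Gx nFx). apply le_refl.
      * intro gx. exact (UG g x Gg gx).
    + intro x; split.
      * intro Fx. destruct (Hlin g x) as [gx|xg].
        -- split; [exact gx|]. intro e; subst x; exact (nFg Fx).
        -- exfalso. exact (nFg (UF x g Fx xg)).
      * intros [gx ne]. apply NNPP; intro nFx. apply ne; symmetry.
        apply claim; [exact (UG g x Gg gx)|exact nFx].
  - intros Hcase z. split.
    2:{ intro e; subst z. unfold sub_arrow, sub_arrow_aux, F_sub.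
        intros a nGa [Fa Ga]. rewrite imp_one_l in Ga. exact (nGa Ga). }
    intro Hs. unfold sub_arrow, sub_arrow_aux, F_sub in Hs.
    destruct Hcase as [Hsub | [g [HGg HFg]]].
    + apply KG. intros a nGa Ga'. apply (Hs a nGa). split; [apply Hsub|]; exact Ga'.
    + apply NNPP; intro nz.
      assert (HK : ~ kernel G z) by (intro K; apply nz, KG, K).
      unfold kernel in HK. apply not_all_ex_not in HK. destruct HK as [a Ha].
      apply imply_to_and in Ha. destruct Ha as [nGa Ha]. apply NNPP in Ha.
      assert (eqg : forall y, G y -> ~ F y -> y = g).
      { intros y Gy nFy. apply NNPP; intro ne. apply nFy, HFg. split.
        - apply HGg; exact Gy.
        - intro e; apply ne; symmetry; exact e. }
      assert (za : mv_imp z a = g).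
      { apply eqg; [exact Ha|]. intro Fz. exact (Hs a nGa (conj Fz Ha)). }
      assert (g1 : g <> mv_one).
      { intro e. apply HFg in Hf0. destruct Hf0 as [gf ne].
        rewrite e in gf, ne. unfold mv_le in gf. rewrite imp_one_l in gf.
        apply ne; symmetry; exact gf. }
      assert (Gg : G g) by (apply HGg, le_refl).
      assert (ag : mv_lt a g).
      { split.
        - destruct (Hlin a g) as [ag|ga]; [exact ag|].
          exfalso; apply nGa, HGg; exact ga.
        - intro e; subst a; exact (nGa Gg). }
      assert (Hm : exists m, mv_lt a m /\ mv_lt m g).
      { apply NNPP; intro nm. apply (proj2 (Hnd g)). exists a. split; [exact ag|exact nm]. }
      destruct Hm as [m [am mg]].
      assert (nGm : ~ G m).
      { intro Gm. apply HGg in Gm. apply (proj2 mg). apply antisym; [exact (proj1 mg)|exact Gm]. }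
      assert (Gzm : G (mv_imp z m)).
      { apply (UG (mv_imp z a)); [exact Ha|]. exact (mono L (mv_neg L z) a m (proj1 am)). }
      assert (zm : mv_imp z m = g).
      { apply eqg; [exact Gzm|]. intro Fz. exact (Hs m nGm (conj Fz Gzm)). }
      assert (az : mv_le a z).
      { destruct (Hlin a z) as [az|za']; [exact az|].
        exfalso. apply g1. rewrite <- za. exact za'. }
      assert (mz : mv_le m z).
      { destruct (Hlin m z) as [mz|zm']; [exact mz|].
        exfalso. apply g1. rewrite <- zm. exact zm'. }
      pose proof (fact2 L z a az) as E1. pose proof (fact2 L z m mz) as E2.
      rewrite za in E1. rewrite zm in E2.
      apply (proj2 am). rewrite <- E1, <- E2. reflexivity.
Qed.
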